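(* Let $n\ge1$, let $q_1,q_2$ be powers of a prime $p$, $q=q_1\otimes q_2$, and $R=A(n,q_1,q_2)$. Let $S$ be the subring of block-diagonal elements $\begin{pmatrix} A & 0\\ 0 & b\end{pmatrix}$ ($A\in M_n(\mathbb{F}_{q_1})$, $b\in\mathbb{F}_{q_2}$) and $J$ the set of elements $\begin{pmatrix} 0 & v\\ 0 & 0\end{pmatrix}$ ($v\in M_{n\times1}(\mathbb{F}_q)$). For $x\in J$ let $C_S(x)=\{s\in S: sx=xs\}$. Let $\mathcal{M}$ be a set of maximal subrings of $S$ of smallest possible cardinality such that $$\bigcup_{x\in J\setminus\{0\}} C_S(x)\subseteq\bigcup_{M\in\mathcal{M}} M,$$ and let $\mathscr{Z}=\{M\oplus J: M\in\mathcal{M}\}$. Then: (1) $\mathscr{S}(R)\cup\mathscr{Z}$ is a cover of $R$; (2) if $R$ is $\sigma$-elementary, then $\mathscr{S}(R)\cup\mathscr{Z}$ is a minimal cover of $R$; (3) $|\mathscr{Z}|\le (|J|-1)/(q-1)=(q^n-1)/(q-1)$; (4) if $R$ is $\sigma$-elementary, then $q^n+1\le\sigma(R)\le (q^{n+1}-1)/(q-1)$.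
   Context: Rings are associative and need not have an identity; a subring is an additive subgroup closed under multiplication. A cover of a ring $R$ is a collection of proper subrings of $R$ whose union is $R$; $\sigma(R)$ is the minimum cardinality of a cover ($\infty$ if none exists), and a minimal cover is one of cardinality $\sigma(R)$. $R$ is $\sigma$-elementary if $\sigma(R)<\sigma(R/I)$ for every nonzero two-sided ideal $I$. For powers $q_1=p^{d_1}$, $q_2=p^{d_2}$ of a prime $p$, $q_1\otimes q_2:=p^{\operatorname{lcm}(d_1,d_2)}$; $\mathbb{F}_{q_1},\mathbb{F}_{q_2}$ are subfields of $\mathbb{F}_q$. $A(n,q_1,q_2)$ is the subring of $M_{n+1}(\mathbb{F}_q)$ of all block matrices $\begin{pmatrix} A & v\\ 0 & b\end{pmatrix}$ with $A\in M_n(\mathbb{F}_{q_1})$, $v\in M_{n\times 1}(\mathbb{F}_q)$, $b\in\mathbb{F}_{q_2}$. $J$ is the Jacobson radical of $R$, and $\mathscr{S}(R)$ is the set of all semisimple complements to $J$ in $R$, i.e. $\mathbb{F}_p$-subalgebras $T$ of $R$ with $R=T\oplus J$; these are exactly the conjugates $(1+x)^{-1}S(1+x)$, $x\in J$. For a subring $M$ of $S$, $M\oplus J=\{m+x: m\in M, x\in J\}$. *)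

(* Defs.v *)
From HB Require Import structures.
From mathcomp Require Import all_boot all_order all_algebra.
Set Implicit Arguments. Unset Strict Implicit. Unset Printing Implicit Defensive.
Import GRing.Theory.
Local Open Scope ring_scope.

Section Generic.
Variables (F : finFieldType) (m : nat).
Local Notation T := 'M[F]_m.

Definition is_subring (A : {set T}) : Prop :=
  0 \in A /\ (forall x y, x \in A -> y \in A -> x - y \in A) /\
  (forall x y, x \in A -> y \in A -> x * y \in A).

Definition proper_subring (R A : {set T}) : Prop :=
  is_subring A /\ A \proper R.

Definition is_ideal (R I : {set T}) : Prop :=
  I \subset R /\ 0 \in I /\ (forall x y, x \in I -> y \in I -> x - y \in I) /\
  (forall r x, r \in R -> x \in I -> r * x \in I /\ x * r \in I).

(* C is a cover of R/I, expressed (correspondence theorem) as a collection of proper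
   subrings of R all containing I whose union is R.  For I = {0} this is a cover of R. *)
Definition cover_mod (R I : {set T}) (C : {set {set T}}) : Prop :=
  (forall A, A \in C -> proper_subring R A /\ I \subset A) /\
  \bigcup_(A in C) A = R.

Definition is_cover (R : {set T}) (C : {set {set T}}) : Prop :=
  cover_mod R [set 0] C.

(* sigma(R/I) = k  (a finite value); sigma(R/I) = infinity iff no k satisfies this *)
Definition is_sigma_mod (R I : {set T}) (k : nat) : Prop :=
  (exists C, cover_mod R I C /\ #|C| = k) /\
  (forall C, cover_mod R I C -> (k <= #|C|)%N).

Definition is_sigma (R : {set T}) (k : nat) : Prop := is_sigma_mod R [set 0] k.

Definition is_minimal_cover (R : {set T}) (C : {set {set T}}) : Prop :=
  is_cover R C /\ forall C', is_cover R C' -> (#|C| <= #|C'|)%N.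

(* sigma(R) < sigma(R/I) for every nonzero two-sided ideal I (infinity is largest) *)
Definition sigma_elementary (R : {set T}) : Prop :=
  forall I, is_ideal R I -> I != [set 0] ->
    exists k, is_sigma R k /\ forall k', is_sigma_mod R I k' -> (k < k')%N.

Definition maximal_subring (S M : {set T}) : Prop :=
  proper_subring S M /\
  forall N, proper_subring S N -> M \subset N -> N = M.

(* semisimple complements of J in R: subrings (= F_p-subalgebras in characteristic p)
   T0 with R = T0 (+) J, i.e. every r in R is uniquely t + x, t in T0, x in J *)
Definition complements (R J : {set T}) : {set {set T}} :=
  [set T0 : {set T} | [&& T0 \subset R,
     [forall x, forall y, (x \in T0) ==> (y \in T0) ==> (x - y \in T0) && (x * y \in T0)],
     (0 \in T0),
     T0 :&: J == [set 0] &
     [forall r, (r \in R) == [exists t, exists x, [&& t \in T0, x \in J & r == t + x]]]]].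

Definition oplusJ (M J : {set T}) : {set T} := [set m + x | m in M, x in J].

Definition centr (S : {set T}) (x : T) : {set T} := [set s in S | s * x == x * s].

End Generic.

Section Arings.
Variables (F : finFieldType) (n : nat).

(* F_{q'} as the (unique) subfield of F of order q' (q' | ... ), i.e. {x | x^q' = x} *)
Definition subF (q' : nat) : {set F} := [set x : F | x ^+ q' == x].

Definition Aring (q1 q2 : nat) : {set 'M[F]_(n + 1)} :=
  [set X | [exists A : 'M[F]_n, exists v : 'M[F]_(n, 1), exists b : F,
     [&& [forall i, forall j, A i j \in subF q1], b \in subF q2 &
         X == block_mx A v 0 b%:M]]].

Definition Sdiag (q1 q2 : nat) : {set 'M[F]_(n + 1)} :=
  [set X | [exists A : 'M[F]_n, exists b : F,
     [&& [forall i, forall j, A i j \in subF q1], b \in subF q2 &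
         X == block_mx A 0 0 b%:M]]].

Definition Jrad : {set 'M[F]_(n + 1)} :=
  [set X | [exists v : 'M[F]_(n, 1), X == block_mx 0 v 0 0]].

End Arings.

(* Main.v *)
Require Import Defs.
From HB Require Import structures.
From mathcomp Require Import all_boot all_order all_algebra.
From mathcomp Require Import all_field zify.
From Stdlib Require Import Classical ClassicalEpsilon.
Local Open Scope ring_scope.

Module Aux.
Set Implicit Arguments. Unset Strict Implicit. Unset Printing Implicit Defensive.
Import GRing.Theory.
Local Open Scope ring_scope.

Section Cnt.
Variables (F : finFieldType) (p : nat).
Hypothesis pcF : p \in [pchar F].

Lemma pnat_pow (R : comNzRingType) (pcR : p \in [pchar R]) d : [pchar R].-nat (p ^ d)%N.
Proof.
have pp := pcharf_prime pcR.
rewrite (eq_pnat _ (pcharf_eq pcR)) pnatX pnatE //.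
by rewrite inE eqxx.
Qed.

Lemma frobB (R : comNzRingType) (pcR : p \in [pchar R]) d (x y : R) :
  (x - y) ^+ (p ^ d) = x ^+ (p ^ d) - y ^+ (p ^ d).
Proof.
by rewrite exprDn_pchar ?pnat_pow // exprNn_pchar ?pnat_pow.
Qed.

Lemma frobD (R : comNzRingType) (pcR : p \in [pchar R]) d (x y : R) :
  (x + y) ^+ (p ^ d) = x ^+ (p ^ d) + y ^+ (p ^ d).
Proof. by rewrite exprDn_pchar ?pnat_pow. Qed.

Definition Pd d : {poly F} := 'X^(p ^ d) - 'X.

Lemma Pd_dvd d m : Pd d %| Pd (d * m).
Proof.
have pcP : p \in [pchar {poly F}] by rewrite pchar_poly.
elim: m => [|m IH]; first by rewrite muln0 /Pd expn0 expr1 subrr dvdp0.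
have -> : Pd (d * m.+1) = (Pd (d * m)) ^+ (p ^ d) + Pd d.
  rewrite /Pd (frobB pcP) -exprM -expnD mulnS addnC.
  by rewrite addrA subrK.
rewrite dvdp_addl ?dvdpp //.
have pp := pcharf_prime pcF.
have : (0 < p ^ d)%N by rewrite expn_gt0 prime_gt0.
case: (p ^ d)%N => // k _.
by rewrite exprS dvdp_mulr.
Qed.
End Cnt.


Section Cnt2.
Variables (F : finFieldType) (p L : nat).
Hypothesis pcF : p \in [pchar F].
Hypothesis cardF : #|F| = (p ^ L)%N.

Lemma size_Pd d : (0 < d)%N -> size (Pd F p d) = (p ^ d).+1.
Proof.
move=> d0; have pp := pcharf_prime pcF.
have h2 : (1 < p ^ d)%N by rewrite -{1}(expn0 p) ltn_exp2l ?prime_gt1.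
rewrite /Pd size_polyDl ?size_polyXn // size_polyN size_polyX.
by rewrite ltnS.
Qed.

Lemma card_subF d : (0 < d)%N -> (d %| L)%N -> #|subF F (p ^ d)| = (p ^ d)%N.
Proof.
move=> d0 /dvdnP [m Lm].
have := Pd_dvd pcF d m => dv.
have : Pd F p (d * m) = \prod_(x <- index_enum F) ('X - x%:P).
  by rewrite /Pd mulnC -Lm -cardF finField_genPoly.
move=> E; rewrite E in dv.
have [msk Hm] := dvdp_prod_XsubC dv.
have Hr : forall x, (x \in subF F (p ^ d)) = (x \in mask msk (index_enum F)).
  move=> x; rewrite inE -root_prod_XsubC -(eqp_root Hm) rootE /Pd !hornerE.
  by rewrite subr_eq0.
rewrite (eq_card Hr).
have /card_uniqP -> : uniq (mask msk (index_enum F)).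
  by rewrite mask_uniq // /index_enum -enumT enum_uniq.
have := eqp_size Hm; rewrite size_prod_XsubC size_Pd //.
by case.
Qed.
End Cnt2.

Section FL.
Variables (F : finFieldType) (p d1 d2 : nat).
Hypothesis pcF : p \in [pchar F].
Hypotheses (d1p : (0 < d1)%N) (d2p : (0 < d2)%N).
Hypothesis cardF : #|F| = (p ^ lcmn d1 d2)%N.

Local Notation Lt := (pPrimeCharType pcF).

Lemma subF_closed d : (0 < d)%N ->
  [/\ 0 \in subF F (p ^ d), 1 \in subF F (p ^ d),
      {in subF F (p ^ d) &, forall x y, x - y \in subF F (p ^ d)} &
      {in subF F (p ^ d) &, forall x y, x * y \in subF F (p ^ d)}].
Proof.
move=> d0; have pp := pcharf_prime pcF.
have k0 : (0 < p ^ d)%N by rewrite expn_gt0 prime_gt0.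
split; rewrite ?inE ?expr1n ?expr0n ?eqxx //=; first by rewrite eqn0Ngt k0.
  by move=> x y; rewrite !inE (frobB pcF) => /eqP -> /eqP ->.
by move=> x y; rewrite !inE exprMn => /eqP -> /eqP ->.
Qed.

Lemma span_set (K : {set F}) : 0 \in K -> {in K &, forall x y, x - y \in K} ->
  forall x : Lt, (x \in <<(enum K : seq Lt)>>%VS) = (x \in K).
Proof.
move=> K0 KB.
have KN : {in K, forall x, - x \in K} by move=> x Kx; rewrite -sub0r KB.
have KD : {in K &, forall x y, x + y \in K}.
  by move=> x y Kx Ky; rewrite -[y]opprK KB ?KN.
have KMn : forall k, {in K, forall x, x *+ k \in K}.
  by move=> k x Kx; elim: k => [|k IH]; rewrite ?mulr0n // mulrS KD.
move=> x; apply/idP/idP => [xU | xK]; last by apply: memv_span; rewrite mem_enum.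
rewrite (coord_span (X := in_tuple (enum K : seq Lt)) xU).
apply: (big_ind (fun y : Lt => y \in K)) => //.
move=> i _.
have : (in_tuple (enum K : seq Lt))`_i \in K.
  by rewrite -[_ \in K]mem_enum mem_nth // size_tuple.
move: ((in_tuple (enum K : seq Lt))`_i) => y Ky.
rewrite /GRing.scale /= /pprimeChar_scale mulr_natl.
exact: KMn.
Qed.


Lemma field_gen (K : {set F}) : 1 \in K -> {in K &, forall x y, x - y \in K} ->
  {in K &, forall x y, x * y \in K} ->
  subF F (p ^ d1) \subset K -> subF F (p ^ d2) \subset K -> K = setT.
Proof.
move=> K1 KB KM s1 s2.
have pp := pcharf_prime pcF.
have p1 : (1 < p)%N by apply: prime_gt1.
have K0 : 0 \in K by rewrite -(subrr 1) KB.
pose U := <<(enum K : seq Lt)>>%VS.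
have memU : forall x : Lt, (x \in U) = (x \in K) := span_set K0 KB.
have asp : is_aspace U.
  rewrite /is_aspace has_algid1 ?memU //=; apply/prodvP => u v; rewrite !memU; exact: KM.
pose UA := ASpace asp.
have cardU : #|U| = #|K| by apply: eq_card => x; rewrite memU.
have key : forall d, (0 < d)%N -> (d %| lcmn d1 d2)%N -> subF F (p ^ d) \subset K -> (d %| \dim UA)%N.
  move=> d d0 dl sK; have [S0 S1 SB SM] := subF_closed d0.
  pose V := <<(enum (subF F (p ^ d)) : seq Lt)>>%VS.
  have memV : forall x : Lt, (x \in V) = (x \in subF F (p ^ d)) := span_set S0 SB.
  have aspV : is_aspace V.
    rewrite /is_aspace has_algid1 ?memV //=; apply/prodvP => u v; rewrite !memV; exact: SM.
  pose VA := ASpace aspV.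
  have sub : (VA <= UA)%VS.
    apply/subvP => x /=; rewrite memV memU; exact: (subsetP sK x).
  have := field_dimS sub.
  have cV : #|V| = #|subF F (p ^ d)| by apply: eq_card => x; rewrite memV.
  rewrite (card_subF pcF cardF d0 dl) card_vspace card_Fp // in cV.
  by rewrite /= (expnI p1 cV).
have dl : (lcmn d1 d2 %| \dim UA)%N.
  by rewrite dvdn_lcm !key // ?dvdn_lcml ?dvdn_lcmr.
have dpos : (0 < \dim UA)%N.
  rewrite lt0n dimv_eq0; apply/negP => /eqP U0.
  have : (1 : Lt) \in UA by rewrite /= memU.
  by rewrite U0 memv0 oner_eq0.
have le1 := dvdn_leq dpos dl.
have cU : #|U| = (p ^ \dim U)%N by rewrite card_vspace card_Fp.
apply/eqP; rewrite eqEcard subsetT cardsT cardF -cardU cU.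
by rewrite leq_exp2l.
Qed.
End FL.

Section VecGen.
Variables (F : finFieldType) (p d1 d2 n : nat).
Hypothesis pcF : p \in [pchar F].
Hypotheses (d1p : (0 < d1)%N) (d2p : (0 < d2)%N).
Hypothesis cardF : #|F| = (p ^ lcmn d1 d2)%N.

Definition okA (q : nat) (A : 'M[F]_n) : bool := [forall i, forall j, A i j \in subF F q].

Lemma field_gen2 (K : {set F}) : 1 \in K -> {in K &, forall x y, x - y \in K} ->
  (forall a k, a \in subF F (p ^ d1) -> k \in K -> a * k \in K) ->
  (forall a k, a \in subF F (p ^ d2) -> k \in K -> a * k \in K) -> K = setT.
Proof.
move=> K1 KB M1 M2.
pose K' := [set c | [forall k in K, c * k \in K]].
have K'P : forall c, reflect (forall k, k \in K -> c * k \in K) (c \in K').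
  move=> c; rewrite inE; apply: (iffP forall_inP) => H k Hk; exact: H.
have : K' = setT.
  apply: (field_gen pcF d1p d2p cardF).
  - by apply/K'P => k; rewrite mul1r.
  - move=> x y /K'P Hx /K'P Hy; apply/K'P => k Hk; rewrite mulrBl KB //; [exact: Hx | exact: Hy].
  - by move=> x y /K'P Hx /K'P Hy; apply/K'P => k Hk; rewrite -mulrA Hx ?Hy.
  - by apply/subsetP => a Ha; apply/K'P => k; apply: M1.
  - by apply/subsetP => a Ha; apply/K'P => k; apply: M2.
move=> E; apply/setP => x; rewrite inE.
have : x \in K' by rewrite E inE.
by move/K'P => /(_ 1 K1); rewrite mulr1.
Qed.

Lemma delta_mul (i j : 'I_n) (u : 'cV[F]_n) : delta_mx i j *m u = u j 0 *: delta_mx i 0.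
Proof.
apply/matrixP => k l; rewrite !mxE (bigD1 j) //= big1 => [|l' nl']; rewrite !mxE.
  rewrite (ord1 l) eqxx !andbT addr0.
  by case: (k == i); rewrite ?mul1r ?mulr1 ?mul0r ?mulr0.
by rewrite (negbTE nl') andbF mul0r.
Qed.

Lemma vec_gen (W : {set 'cV[F]_n}) u : 0 \in W -> {in W &, forall x y, x - y \in W} ->
  (forall A v, okA (p ^ d1) A -> v \in W -> A *m v \in W) ->
  (forall b v, b \in subF F (p ^ d2) -> v \in W -> b *: v \in W) ->
  u \in W -> u != 0 -> W = setT.
Proof.
move=> W0 WB WA Wb Wu /matrix0Pn [j [l]]; rewrite (ord1 l) => nz.
have [S10 S11 S1B S1M] := subF_closed pcF d1p.
have [S20 S21 S2B S2M] := subF_closed pcF d2p.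
have WN : {in W, forall x, - x \in W} by move=> x Kx; rewrite -sub0r WB.
have WD : {in W &, forall x y, x + y \in W}.
  by move=> x y Kx Ky; rewrite -[y]opprK WB ?WN.
set c := u j 0 in nz.
pose K := [set k | [forall i, (k * c) *: delta_mx i (0 : 'I_1) \in W]].
have KP : forall k, reflect (forall i, (k * c) *: delta_mx i (0 : 'I_1) \in W) (k \in K).
  by move=> k; rewrite inE; apply: forallP.
have KT : K = setT.
  apply: field_gen2.
  - apply/KP => i; rewrite mul1r -delta_mul WA //.
    apply/forallP => a; apply/forallP => b; rewrite mxE.
    by case: (_ && _).
  - move=> x y /KP Hx /KP Hy; apply/KP => i.
    by rewrite mulrBl scalerBl WB.
  - move=> a k Ha /KP Hk; apply/KP => i.
    rewrite -mulrA -scalerA -mul_scalar_mx WA //.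
    apply/forallP => a'; apply/forallP => b; rewrite mxE.
    by case: (_ == _).
  - move=> a k Ha /KP Hk; apply/KP => i.
    by rewrite -mulrA -scalerA Wb.
apply/setP => v; rewrite inE.
rewrite (matrix_sum_delta v).
apply: (big_ind (fun y => y \in W)) => // i _.
apply: (big_ind (fun y => y \in W)) => // l' _.
rewrite (ord1 l').
have : (v i 0 / c) \in K by rewrite KT inE.
by move/KP => /(_ i); rewrite mulfVK.
Qed.
End VecGen.

Section Gen.
Variables (F : finFieldType) (m : nat).
Local Notation T := 'M[F]_m.

Lemma exists_max (S C : {set T}) : proper_subring S C ->
  exists M, maximal_subring S M /\ C \subset M.
Proof.
move=> pC; have [k Hk] : exists k, (#|S| - #|C| <= k)%N by exists (#|S| - #|C|)%N.
elim: k C pC Hk => [|k IH] C pC Hk;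
  (case: (classic (exists N, [/\ proper_subring S N, C \subset N & N != C])) =>
    [[N [pN sCN nNC]] | nex]).
- have : C \proper N by rewrite properEneq eq_sym nNC sCN.
  move/proper_card => lt; have ltN := proper_card pN.2.
  have ltC := proper_card pC.2. lia.
- exists C; split => //; split => // N pN sCN.
  by case: (eqVneq N C) => // nNC; exfalso; apply: nex; exists N.
- have : C \proper N by rewrite properEneq eq_sym nNC sCN.
  move/proper_card => lt; have ltN := proper_card pN.2.
  have [M [HM sNM]] := IH N pN ltac:(lia).
  by exists M; split => //; apply: subset_trans sNM.
- exists C; split => //; split => // N pN sCN.
  by case: (eqVneq N C) => // nNC; exfalso; apply: nex; exists N.
Qed.

Definition gmax (S C : {set T}) : {set T} :=
  epsilon (inhabits set0) (fun M => maximal_subring S M /\ C \subset M).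

Lemma gmaxP S C : proper_subring S C -> maximal_subring S (gmax S C) /\ C \subset gmax S C.
Proof. move=> pC; apply (epsilon_spec (inhabits set0) (fun M => maximal_subring S M /\ C \subset M)); exact: exists_max. Qed.

Lemma exists_min (P : {set {set T}} -> Prop) : (exists C, P C) ->
  exists C, P C /\ forall C', P C' -> (#|C| <= #|C'|)%N.
Proof.
case=> C0 HC0; have [k Hk] : exists k, (#|C0| <= k)%N by exists #|C0|.
elim: k C0 HC0 Hk => [|k IH] C HC Hk.
  by exists C; split => // C' _; lia.
case: (classic (exists C', P C' /\ (#|C'| < #|C|)%N)) => [[C' [HC' lt]] | nex].
  apply: (IH C' HC'); lia.
exists C; split => // C' HC'; rewrite leqNgt; apply/negP => lt; apply: nex.
by exists C'.
Qed.

End Gen.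

Lemma count_fib (I J : finType) (f : I -> J) (D : {set I}) k :
  (forall x, x \in D -> k <= #|[set y in D | f y == f x]|)%N ->
  (#|f @: D| * k <= #|D|)%N.
Proof.
move=> Hf; rewrite -[X in (_ <= X)%N]sum1_card (partition_big_imset f) /= -sum_nat_const.
apply: leq_sum => j /imsetP [x Hx ->].
rewrite sum1_card; apply: (leq_trans (Hf x Hx)).
by rewrite leq_eqVlt; apply/orP; left; apply/eqP; apply: eq_card => y; rewrite !inE.
Qed.

Section Blk.
Variables (F : finFieldType) (n : nat).
Local Notation T := 'M[F]_(n + 1).

Definition mk (A : 'M[F]_n) (v : 'cV[F]_n) (b : F) : T := block_mx A v 0 b%:M.

Lemma sc0 : (0 : F)%:M = 0 :> 'M[F]_1.
Proof. by apply/matrixP => i j; rewrite !mxE mul0rn. Qed.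

Lemma scB (a b : F) : (a - b)%:M = a%:M - b%:M :> 'M[F]_1.
Proof. by apply/matrixP => i j; rewrite !mxE mulrnBl. Qed.

Lemma mk_mul A v b A' v' b' :
  mk A v b * mk A' v' b' = mk (A *m A') (A *m v' + b' *: v) (b * b').
Proof.
rewrite /mk -mulmxE mulmx_block !mulmx0 !mul0mx !addr0 !add0r.
by rewrite mul_mx_scalar scalar_mxM.
Qed.

Lemma mk_sub A v b A' v' b' :
  mk A v b - mk A' v' b' = mk (A - A') (v - v') (b - b').
Proof. by rewrite /mk opp_block_mx add_block_mx oppr0 addr0 scB. Qed.

Lemma mk_add A v b A' v' b' :
  mk A v b + mk A' v' b' = mk (A + A') (v + v') (b + b').
Proof.
rewrite add_block_mx addr0; congr block_mx.
by apply/matrixP => i j; rewrite !mxE mulrnDl.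
Qed.

Lemma mk0 : mk 0 0 0 = 0.
Proof. by rewrite /mk sc0 block_mx0. Qed.

Lemma mk_inj A v b A' v' b' : mk A v b = mk A' v' b' -> [/\ A = A', v = v' & b = b'].
Proof.
case/eq_block_mx => -> -> _ E; split => //.
by have := congr1 (fun M : 'M[F]_1 => M 0 0) E; rewrite !mxE /= !mulr1n.
Qed.

Lemma mk_scale (c : F) A v b : c *: mk A v b = mk (c *: A) (c *: v) (c * b).
Proof. by rewrite /mk scale_block_mx scaler0 scale_scalar_mx. Qed.

End Blk.

Section Mem.
Variables (F : finFieldType) (n p d1 d2 : nat).
Local Notation T := 'M[F]_(n + 1).
Local Notation R := (Aring F n (p ^ d1) (p ^ d2)).
Local Notation S := (Sdiag F n (p ^ d1) (p ^ d2)).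
Local Notation J := (Jrad F n).
Local Notation ok1 := (@okA F n (p ^ d1)).
Local Notation F2 := (subF F (p ^ d2)).

Lemma inR X : reflect (exists A v b, [/\ ok1 A, b \in F2 & X = mk A v b]) (X \in R).
Proof.
rewrite inE; apply: (iffP existsP) => [[A /existsP [v /existsP [b /and3P [H1 H2 /eqP ->]]]] | [A [v [b [H1 H2 ->]]]]].
  by exists A, v, b.
by exists A; apply/existsP; exists v; apply/existsP; exists b; apply/and3P; split.
Qed.

Lemma inS X : reflect (exists A b, [/\ ok1 A, b \in F2 & X = mk A 0 b]) (X \in S).
Proof.
rewrite inE; apply: (iffP existsP) => [[A /existsP [b /and3P [H1 H2 /eqP ->]]] | [A [b [H1 H2 ->]]]].
  by exists A, b.
by exists A; apply/existsP; exists b; apply/and3P; split.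
Qed.

Lemma inJ X : reflect (exists v, X = mk 0 v 0) (X \in J).
Proof.
rewrite inE /mk sc0; apply: (iffP existsP) => [[v /eqP ->] | [v ->]]; exists v => //.
Qed.

Lemma mkR A v b : ok1 A -> b \in F2 -> mk A v b \in R.
Proof. by move=> H1 H2; apply/inR; exists A, v, b. Qed.
Lemma mkS A b : ok1 A -> b \in F2 -> mk A 0 b \in S.
Proof. by move=> H1 H2; apply/inS; exists A, b. Qed.
Lemma mkJ v : mk 0 v 0 \in J.
Proof. by apply/inJ; exists v. Qed.

End Mem.

Lemma subsub (V : zmodType) (a b c d : V) : (a - b) - (c - d) = (a - c) - (b - d).
Proof. by rewrite !opprB addrACA [RHS]addrACA [- b + _]addrC. Qed.

Section Main.
Variables (F : finFieldType) (n p d1 d2 : nat).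
Hypothesis pcF : p \in [pchar F].
Hypotheses (d1p : (0 < d1)%N) (d2p : (0 < d2)%N).
Local Notation T := 'M[F]_(n + 1).
Local Notation R := (Aring F n (p ^ d1) (p ^ d2)).
Local Notation S := (Sdiag F n (p ^ d1) (p ^ d2)).
Local Notation J := (Jrad F n).
Local Notation ok1 := (@okA F n (p ^ d1)).
Local Notation F1 := (subF F (p ^ d1)).
Local Notation F2 := (subF F (p ^ d2)).
Implicit Types (A B : 'M[F]_n) (b : F) (v w : 'cV[F]_n) (M Y : {set 'M[F]_(n + 1)}) (X : 'M[F]_(n + 1)).

Lemma F1c : [/\ 0 \in F1, 1 \in F1, {in F1 &, forall x y, x - y \in F1} & {in F1 &, forall x y, x * y \in F1}].
Proof. exact: subF_closed. Qed.
Lemma F2c : [/\ 0 \in F2, 1 \in F2, {in F2 &, forall x y, x - y \in F2} & {in F2 &, forall x y, x * y \in F2}].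
Proof. exact: subF_closed. Qed.

Lemma F1D : {in F1 &, forall x y, x + y \in F1}.
Proof.
have [H0 H1 HB HM] := F1c => x y Hx Hy.
by rewrite -[y]opprK -[- y]sub0r HB ?HB.
Qed.

Lemma ok0 : ok1 0.
Proof. by have [H0 _ _ _] := F1c; apply/forallP => i; apply/forallP => j; rewrite mxE. Qed.

Lemma okB A B : ok1 A -> ok1 B -> ok1 (A - B).
Proof.
have [_ _ HB _] := F1c => /forallP HA /forallP HBm.
apply/forallP => i; apply/forallP => j; rewrite !mxE HB //.
  exact: (forallP (HA i)).
exact: (forallP (HBm i)).
Qed.

Lemma okM A B : ok1 A -> ok1 B -> ok1 (A *m B).
Proof.
have [H0 _ _ HM] := F1c => /forallP HA /forallP HBm.
apply/forallP => i; apply/forallP => j; rewrite !mxE.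
apply: (big_ind (fun x => x \in F1)) => //; first exact: F1D.
move=> k _; apply: HM; [exact: (forallP (HA i)) | exact: (forallP (HBm k))].
Qed.

Lemma okS a : a \in F1 -> ok1 a%:M.
Proof.
have [H0 _ _ _] := F1c => Ha.
by apply/forallP => i; apply/forallP => j; rewrite mxE; case: (i == j).
Qed.

Lemma ok1m : ok1 1%:M.
Proof. by have [_ H1 _ _] := F1c; apply: okS. Qed.

Lemma R_sub : is_subring R.
Proof.
have [H0 _ HB HM] := F2c.
split; first by rewrite -mk0; apply: mkR; rewrite ?ok0.
split=> x y /inR [A [v [b [HA Hb ->]]]] /inR [A' [v' [b' [HA' Hb' ->]]]].
  by rewrite mk_sub mkR ?okB ?HB.
by rewrite mk_mul mkR ?okM ?HM.
Qed.

Lemma S_sub : is_subring S.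
Proof.
have [H0 _ HB HM] := F2c.
split; first by rewrite -mk0; apply: mkS; rewrite ?ok0.
split=> x y /inS [A [b [HA Hb ->]]] /inS [A' [b' [HA' Hb' ->]]].
  by rewrite mk_sub subrr mkS ?okB ?HB.
by rewrite mk_mul mulmx0 scaler0 addr0 mkS ?okM ?HM.
Qed.

Lemma RD : {in R &, forall x y, x + y \in R}.
Proof.
have [H0 [HB _]] := R_sub => x y Hx Hy.
by rewrite -[y]opprK -[- y]sub0r HB ?HB.
Qed.

Lemma SR : S \subset R.
Proof. by apply/subsetP => x /inS [A [b [HA Hb ->]]]; apply: mkR. Qed.

Lemma JR : J \subset R.
Proof.
have [H0 _ _ _] := F2c.
by apply/subsetP => x /inJ [v ->]; apply: mkR; rewrite ?ok0.
Qed.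

Lemma R_dec X : X \in R -> exists A v b, [/\ ok1 A, b \in F2 & X = mk A 0 b + mk 0 v 0].
Proof.
case/inR => [A [v [b [HA Hb ->]]]]; exists A, v, b; split => //.
by rewrite mk_add addr0 add0r addr0.
Qed.

Lemma J_ideal : is_ideal R J.
Proof.
split; first exact: JR.
split; first by rewrite -mk0 mkJ.
split; first by move=> x y /inJ [v ->] /inJ [v' ->]; rewrite mk_sub !subrr mkJ.
move=> r x /inR [A [v [b [HA Hb ->]]]] /inJ [w ->].
by rewrite !mk_mul !mulmx0 !mul0mx !mulr0 !mul0r ?scaler0 ?scale0r ?addr0 ?add0r !mkJ.
Qed.

Definition Tw (w : 'cV[F]_n) : {set T} :=
  [set X | [exists A, exists b, [&& ok1 A, b \in F2 & X == mk A (A *m w - b *: w) b]]].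

Lemma inTw w X : reflect (exists (A : 'M[F]_n) (b : F), [/\ ok1 A, b \in F2 & X = mk A (A *m w - b *: w) b]) (X \in Tw w).
Proof.
rewrite inE; apply: (iffP existsP) => [[A /existsP [b /and3P [H1 H2 /eqP ->]]] | [A [b [H1 H2 ->]]]].
  by exists A, b.
by exists A; apply/existsP; exists b; apply/and3P; split.
Qed.

Lemma mkTw w A b : ok1 A -> b \in F2 -> mk A (A *m w - b *: w) b \in Tw w.
Proof. by move=> H1 H2; apply/inTw; exists A, b. Qed.

Lemma Tw_mul w A b A' b' :
  mk A (A *m w - b *: w) b * mk A' (A' *m w - b' *: w) b' =
  mk (A *m A') ((A *m A') *m w - (b * b') *: w) (b * b').
Proof.
rewrite mk_mul; congr mk.
rewrite mulmxBr -scalemxAr mulmxA scalerBr scalerA [b' * b]mulrC.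
by rewrite addrA subrK.
Qed.

Lemma Tw_sub w A b A' b' :
  mk A (A *m w - b *: w) b - mk A' (A' *m w - b' *: w) b' =
  mk (A - A') ((A - A') *m w - (b - b') *: w) (b - b').
Proof. by rewrite mk_sub subsub mulmxBl scalerBl. Qed.

Lemma Tw_subring w : is_subring (Tw w).
Proof.
have [H0 _ HB HM] := F2c.
split; first by have := mkTw w ok0 H0; rewrite mul0mx scale0r subrr mk0.
split=> x y /inTw [A [b [HA Hb ->]]] /inTw [A' [b' [HA' Hb' ->]]].
  by rewrite Tw_sub mkTw ?okB ?HB.
by rewrite Tw_mul mkTw ?okM ?HM.
Qed.

Lemma TwR w : Tw w \subset R.
Proof. by apply/subsetP => x /inTw [A [b [HA Hb ->]]]; apply: mkR. Qed.

Lemma TwJ w v : mk 0 v 0 \in Tw w -> v = 0.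
Proof.
case/inTw => [A [b [HA Hb /mk_inj [<- -> <-]]]].
by rewrite mul0mx scale0r subrr.
Qed.


Lemma TwJ0 w : Tw w :&: J = [set 0].
Proof.
have [H0 _ _ _] := F2c.
apply/setP => x; rewrite in_setI in_set1; apply/andP/eqP => [[Hx HJ] | ->].
  case/inJ: HJ => v Ex.
  by move: Hx; rewrite Ex => /TwJ ->; rewrite mk0.
split; last by rewrite -mk0 mkJ.
by have [Z0 _] := Tw_subring w.
Qed.

Lemma e1R : mk 1%:M 0 0 \in R.
Proof. by have [H0 _ _ _] := F2c; apply: mkR; rewrite ?ok1m. Qed.

Lemma compl_eq : complements R J = [set Tw w | w in [set: 'cV[F]_n]].
Proof.
have [H0 _ HB HM] := F2c.
apply/setP => T0; rewrite inE; apply/idP/idP.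
  case/and5P => sT0 /forallP cT0 T00 /eqP IT0 /forallP DT0.
  have T0B : {in T0 &, forall x y, x - y \in T0}.
    by move=> x y Hx Hy; have /forallP/(_ y)/implyP/(_ Hx)/implyP/(_ Hy)/andP[] := cT0 x.
  have T0M : {in T0 &, forall x y, x * y \in T0}.
    by move=> x y Hx Hy; have /forallP/(_ y)/implyP/(_ Hx)/implyP/(_ Hy)/andP[] := cT0 x.
  have T0J : forall v, mk 0 v 0 \in T0 -> v = 0.
    move=> v Hv; have : mk 0 v 0 \in T0 :&: J by rewrite inE Hv mkJ.
    rewrite IT0 inE => /eqP; rewrite -mk0 => /mk_inj [_ -> _] //.
  have dec : forall r, r \in R -> exists t x, [/\ t \in T0, x \in J & r = t + x].
    move=> r Hr; have /eqP := DT0 r; rewrite Hr => /esym/existsP [t /existsP [x /and3P [Ht Hx /eqP E]]].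
    by exists t, x.
  have [t [x [Ht Hx E1]]] := dec _ e1R.
  case/inJ: Hx => u Ex.
  have Ef : t = mk 1%:M (- u) 0.
    by rewrite -[t](addrK x) -E1 Ex mk_sub !subr0 sub0r.
  set w := - u in Ef.
  have C1 : T0 \subset Tw w.
    apply/subsetP => r Hr; have := subsetP sT0 r Hr => /inR [A [v [b [HA Hb Er]]]].
    have Hd : t * r - r * t \in T0 by rewrite T0B ?T0M.
    rewrite Ef Er !mk_mul mul1mx mulmx1 mul1mx mul0r mulr0 scale0r addr0 mk_sub subrr subrr in Hd.
    have /eqP := T0J _ Hd; rewrite subr_eq0 => /eqP Ev.
    have -> : r = mk A (A *m w - b *: w) b. by rewrite Er -Ev addrK.
    exact: mkTw.
  apply/imsetP; exists w; rewrite ?inE //.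
  apply/eqP; rewrite eqEsubset C1 /=.
  apply/subsetP => y Hy.
  have [t' [x' [Ht' Hx' Ey]]] := dec y (subsetP (TwR w) y Hy).
  have Ht'w : t' \in Tw w := subsetP C1 _ Ht'.
  have [_ [TB _]] := Tw_subring w.
  have : t' - y \in Tw w :&: J.
    rewrite in_setI TB //=.
    have -> : t' - y = 0 - x' by rewrite Ey opprD addrA subrr.
    by have [_ [_ [JB _]]] := J_ideal; rewrite JB // -mk0 mkJ.
  by rewrite TwJ0 in_set1 subr_eq0 => /eqP <-.
case/imsetP => w _ ->.
have [Z0 [ZB ZM]] := Tw_subring w.
apply/and5P; split.
- exact: TwR.
- apply/forallP => x; apply/forallP => y; apply/implyP => Hx; apply/implyP => Hy.
  by rewrite ZB ?ZM.
- exact: Z0.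
- by rewrite TwJ0.
apply/forallP => r; apply/eqP; apply/idP/idP.
  case/inR => [A [v [b [HA Hb ->]]]].
  apply/existsP; exists (mk A (A *m w - b *: w) b).
  apply/existsP; exists (mk 0 (v - (A *m w - b *: w)) 0).
  by rewrite mkTw ?mkJ //= mk_add addr0 subrKC addr0 eqxx.
case/existsP => t /existsP [x /and3P [Ht Hx /eqP ->]].
by apply: RD; [apply: (subsetP (TwR w)) | apply: (subsetP JR)].
Qed.


Lemma Tw_inj : injective Tw.
Proof.
move=> w w' E.
have [H0 _ _ _] := F2c.
have := mkTw w ok1m H0; rewrite E => /inTw [A [b [HA Hb /mk_inj [EA Ev Eb]]]].
by move: Ev; rewrite -EA -Eb !mul1mx !scale0r !subr0.
Qed.

Lemma card_compl : #|complements R J| = (#|F| ^ n)%N.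
Proof.
rewrite compl_eq card_in_imset; last by move=> x y _ _; apply: Tw_inj.
by rewrite cardsT card_mx muln1.
Qed.

Lemma oplus_mem M X : M \subset S -> X \in oplusJ M J ->
  exists A v b, mk A 0 b \in M /\ X = mk A v b.
Proof.
move=> sMS /imset2P [m x Hm Hx ->].
have /inS [A [b [HA Hb Em]]] := subsetP sMS m Hm.
case/inJ: Hx => v ->; exists A, v, b; rewrite -Em; split => //.
by rewrite Em mk_add addr0 add0r addr0.
Qed.

Lemma oplus_in M A v b : mk A 0 b \in M -> mk A v b \in oplusJ M J.
Proof.
move=> Hm; apply/imset2P; exists (mk A 0 b) (mk 0 v 0) => //; first exact: mkJ.
by rewrite mk_add addr0 add0r addr0.
Qed.

Lemma oplus_S M A b : M \subset S -> mk A 0 b \in oplusJ M J -> mk A 0 b \in M.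
Proof.
move=> sMS /(oplus_mem sMS) [A' [v [b' [Hm /mk_inj [-> _ ->]]]]] //.
Qed.

Lemma oplus_sub M : is_subring M -> M \subset S ->
  [/\ is_subring (oplusJ M J), oplusJ M J \subset R & J \subset oplusJ M J].
Proof.
move=> [M0 [MB MM]] sMS; split.
- split; first by rewrite -mk0 oplus_in ?mk0.
  split => x y /(oplus_mem sMS) [A [v [b [Hm ->]]]] /(oplus_mem sMS) [A' [v' [b' [Hm' ->]]]].
    by rewrite mk_sub; apply: oplus_in; have := MB _ _ Hm Hm'; rewrite mk_sub subrr.
  rewrite mk_mul; apply: oplus_in; have := MM _ _ Hm Hm'.
  by rewrite !mk_mul mulmx0 scaler0 addr0.
- apply/subsetP => x /(oplus_mem sMS) [A [v [b [Hm ->]]]].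
  by have /inS [A' [b' [HA Hb /mk_inj [-> _ ->]]]] := subsetP sMS _ Hm; apply: mkR.
apply/subsetP => x /inJ [v ->]; apply: oplus_in; rewrite mk0 //.
Qed.

Hypothesis n1 : (0 < n)%N.
Definition u1 : 'cV[F]_n := const_mx 1.
Lemma u1_neq0 : u1 != 0.
Proof. by apply/matrix0Pn; exists (Ordinal n1), 0; rewrite mxE oner_eq0. Qed.

Lemma x1_J0 : mk 0 u1 0 \in J :\ 0.
Proof.
rewrite in_setD1 mkJ andbT -mk0; apply/eqP => /mk_inj [_ E _].
by move: u1_neq0; rewrite E eqxx.
Qed.

Lemma Tw_proper w : proper_subring R (Tw w).
Proof.
split; first exact: Tw_subring.
rewrite properE TwR /=; apply/negP => /subsetP /(_ (mk 0 u1 0)).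
have [H0 _ _ _] := F2c.
move=> H; have /TwJ E := H (mkR _ ok0 H0).
by move: u1_neq0; rewrite E eqxx.
Qed.

Lemma oplus_proper M : is_subring M -> M \subset S -> M \proper S ->
  proper_subring R (oplusJ M J) /\ J \subset oplusJ M J.
Proof.
move=> sM sMS pMS; have [H1 H2 H3] := oplus_sub sM sMS.
split => //; split => //.
rewrite properE H2 /=; apply/negP => sRO.
move: pMS; rewrite properE sMS /= => /negP; apply.
apply/subsetP => x Hx; have /inS [A [b [HA Hb Ex]]] := Hx.
rewrite Ex; apply: oplus_S => //; rewrite -Ex.
exact: (subsetP sRO _ (subsetP SR _ Hx)).
Qed.


Lemma comm_eq A b w : (mk A 0 b * mk 0 w 0 == mk 0 w 0 * mk A 0 b) = (A *m w == b *: w).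
Proof.
rewrite !mk_mul !mulmx0 !mul0mx !mulr0 !mul0r !scaler0 !addr0 !add0r.
by apply/eqP/eqP => [/mk_inj [_ -> _] | ->].
Qed.

Lemma in_centr A b w : ok1 A -> b \in F2 -> A *m w = b *: w -> mk A 0 b \in centr S (mk 0 w 0).
Proof. by move=> HA Hb E; rewrite inE mkS //= comm_eq E eqxx. Qed.

Lemma centr_inv s w : s \in centr S (mk 0 w 0) -> exists A b, [/\ ok1 A, b \in F2, s = mk A 0 b & A *m w = b *: w].
Proof.
rewrite inE => /andP [/inS [A [b [HA Hb ->]]] E]; exists A, b; split => //.
by move: E; rewrite comm_eq => /eqP.
Qed.

Definition Zset (Mc : {set {set 'M[F]_(n + 1)}}) := [set oplusJ M J | M in Mc].

Lemma cover1 (Mc : {set {set 'M[F]_(n + 1)}}) :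
  (forall M, M \in Mc -> maximal_subring S M) ->
  (\bigcup_(x in J :\ 0) centr S x) \subset (\bigcup_(M in Mc) M) ->
  is_cover R (complements R J :|: Zset Mc).
Proof.
move=> Hmax Hcov; have [H0 _ _ _] := F2c.
have memb : forall Y : {set 'M[F]_(n + 1)}, Y \in complements R J :|: Zset Mc ->
    proper_subring R Y /\ [set 0] \subset Y.
  move=> Y /setUP [| /imsetP [M HM ->]].
    rewrite compl_eq => /imsetP [w _ ->]; split; first exact: Tw_proper.
    by rewrite sub1set; have [[Z0 _] _] := Tw_proper w.
  have [[sM pM] _] := Hmax M HM.
  have sMS : M \subset S by move: pM; rewrite properE => /andP [].
  have [pO JO] := oplus_proper sM sMS pM; split => //.
  by rewrite sub1set (subsetP JO) // -mk0 mkJ.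
split; first exact: memb.
apply/eqP; rewrite eqEsubset; apply/andP; split.
  apply/bigcupsP => Y /memb [[_ pA] _]; by move: pA; rewrite properE => /andP [].
apply/subsetP => X /inR [A [v [b [HA Hb ->]]]].
case: (boolP [exists w : 'cV[F]_n, (w != 0) && (A *m w == b *: w)]).
  case/existsP => w /andP [nw /eqP Ew].
  have : mk A 0 b \in \bigcup_(x in J :\ 0) centr S x.
    apply/bigcupP; exists (mk 0 w 0); last exact: in_centr.
    rewrite in_setD1 mkJ andbT -mk0; apply/eqP => /mk_inj [_ E _].
    by move: nw; rewrite E eqxx.
  move/(subsetP Hcov) => /bigcupP [M HM HsM].
  apply/bigcupP; exists (oplusJ M J); last exact: oplus_in.
  by rewrite in_setU; apply/orP; right; apply/imsetP; exists M.
move/existsPn => Hn.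
pose f w := A *m w - b *: w.
have finj : injective f.
  move=> w w' E; apply/eqP; rewrite -subr_eq0; apply: contraNT (Hn (w - w')) => nz.
  rewrite nz /= mulmxBr scalerBr; move: E; rewrite /f => E.
  by rewrite -subr_eq0 -subsub E subrr.
have [g fg gf] := injF_bij finj.
apply/bigcupP; exists (Tw (g v)).
  by rewrite in_setU compl_eq imset_f ?inE.
by have := mkTw (g v) HA Hb; rewrite -/(f (g v)) gf.
Qed.


Definition adm (Mc : {set {set 'M[F]_(n + 1)}}) :=
  (forall M, M \in Mc -> maximal_subring S M) /\
  (\bigcup_(x in J :\ 0) centr S x) \subset (\bigcup_(M in Mc) M).

Lemma centrE s x : (s \in centr S x) = (s \in S) && (s * x == x * s).
Proof. by rewrite /centr [in LHS]inE. Qed.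

Lemma centr_proper x : x \in J :\ 0 -> proper_subring S (centr S x).
Proof.
case/setD1P => nx0 /inJ [w Ex].
have [H0 H1 _ _] := F2c.
have [S0 [SB SM]] := S_sub.
split.
  split; first by rewrite centrE S0 mul0r mulr0 eqxx.
  split => s s'; rewrite !centrE => /andP [Hs /eqP Cs] /andP [Hs' /eqP Cs'].
    by rewrite SB //= mulrBl mulrBr Cs Cs'.
  by rewrite SM //= -mulrA Cs' mulrA Cs mulrA.
rewrite properE; apply/andP; split; first by apply/subsetP => s; rewrite centrE => /andP [].
apply/negP => /subsetP /(_ (mk 0 0 1)); rewrite Ex centrE mkS ?ok0 //= comm_eq mul0mx scale1r.
move=> /(_ isT) /eqP E; move: nx0; rewrite Ex -E mk0 eqxx //.
Qed.

Lemma centr_scale c x : c != 0 -> centr S (c *: x) = centr S x.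
Proof.
move=> nc; apply/setP => s; rewrite !centrE; congr (_ && _).
rewrite -!mulmxE -scalemxAr -scalemxAl; apply/eqP/eqP => [|-> //].
exact: scalerI.
Qed.

Lemma card_J : #|J| = (#|F| ^ n)%N.
Proof.
have -> : J = [set mk 0 v 0 | v in [set: 'cV[F]_n]].
  apply/setP => X; apply/idP/imsetP => [/inJ [v ->] | [v _ ->]]; last exact: mkJ.
  by exists v; rewrite ?inE.
rewrite card_in_imset; first by rewrite cardsT card_mx muln1.
by move=> v v' _ _ /mk_inj [].
Qed.

Lemma bound3 (Mc : {set {set 'M[F]_(n + 1)}}) :
  (forall Mc', adm Mc' -> (#|Mc| <= #|Mc'|)%N) ->
  (#|Mc| <= (#|J| - 1) %/ (#|F| - 1))%N.
Proof.
move=> Hmin.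
pose D := J :\ 0.
pose Mc' := [set gmax S C | C in [set centr S x | x in D]].
have adm' : adm Mc'.
  split.
    move=> M /imsetP [C /imsetP [x Hx ->] ->].
    exact: (gmaxP (centr_proper Hx)).1.
  apply/bigcupsP => x Hx; apply/subsetP => s Hs.
  apply/bigcupP; exists (gmax S (centr S x)); first by rewrite imset_f // imset_f.
  exact: (subsetP (gmaxP (centr_proper Hx)).2).
have qpos : (0 < #|F| - 1)%N.
  have := finNzRing_gt1 F; rewrite subn_gt0 //.
apply: (leq_trans (Hmin _ adm')).
apply: (leq_trans (leq_imset_card _ _)).
rewrite leq_divRL //.
have -> : (#|J| - 1)%N = #|D|.
  have J0 : (0 : 'M[F]_(n + 1)) \in J by rewrite -mk0 mkJ.
  by rewrite (cardsD1 0 J) J0 add1n subn1.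
apply: count_fib => x Hx.
have [nx0 xJ] := setD1P Hx.
have -> : (#|F| - 1)%N = #|[set c *: x | c in [set~ (0 : F)]]|.
  rewrite card_in_imset ?cardsC1 ?subn1 //.
  move=> c c' _ _ /eqP; rewrite -subr_eq0 -scalerBl scaler_eq0 subr_eq0 (negbTE nx0) orbF.
  by move/eqP.
apply: subset_leq_card; apply/subsetP => y /imsetP [c Hc ->].
have nc : c != 0 by move: Hc; rewrite !inE.
rewrite inE centr_scale // eqxx andbT in_setD1.
case/inJ: xJ nx0 => w ->; rewrite mk_scale scaler0 mulr0 mkJ andbT.
rewrite -mk0 => nw; apply/eqP => /mk_inj [_ E _].
move: nw; rewrite -{1}(scale0r w).
suff -> : w = 0 by rewrite scale0r eqxx.
by move: E => /eqP; rewrite scaler_eq0 (negbTE nc) /= => /eqP.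
Qed.


Hypothesis cardF : #|F| = (p ^ lcmn d1 d2)%N.

Lemma simp (Y : {set 'M[F]_(n + 1)}) : is_subring Y ->
  (forall A b, ok1 A -> b \in F2 -> exists v, mk A v b \in Y) ->
  forall u, u != 0 -> mk 0 u 0 \in Y -> forall v, mk 0 v 0 \in Y.
Proof.
move=> [Y0 [YB YM]] surj u nu Hu v.
have [H0 _ _ _] := F2c.
pose W := [set u | mk 0 u 0 \in Y].
suff : W = setT by move/setP/(_ v); rewrite !inE.
apply: (vec_gen pcF d1p d2p cardF (u := u)).
- by rewrite inE mk0.
- by move=> x y; rewrite !inE => Hx Hy; have := YB _ _ Hx Hy; rewrite mk_sub !subrr.
- move=> A x HA; rewrite !inE => Hx.
  have [y Hy] := surj A 0 HA H0.
  by have := YM _ _ Hy Hx; rewrite mk_mul mulmx0 scale0r addr0 mulr0.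
- move=> b x Hb; rewrite !inE => Hx.
  have [y Hy] := surj 0 b ok0 Hb.
  by have := YM _ _ Hx Hy; rewrite mk_mul mulmx0 mul0mx add0r mul0r.
- by rewrite inE.
- exact: nu.
Qed.

Lemma full (Y : {set 'M[F]_(n + 1)}) : is_subring Y ->
  (forall A b, ok1 A -> b \in F2 -> exists v, mk A v b \in Y) ->
  (forall v, mk 0 v 0 \in Y) -> R \subset Y.
Proof.
move=> [Y0 [YB YM]] surj HJ; apply/subsetP => X /inR [A [v [b [HA Hb ->]]]].
have [y Hy] := surj A b HA Hb.
have YD : {in Y &, forall x y, x + y \in Y}.
  by move=> x z Hx Hz; rewrite -[z]opprK -[- z]sub0r YB ?YB.
have := YD _ _ Hy (HJ (v - y)); rewrite mk_add addr0 addrC subrK addr0 //.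
Qed.

Lemma J_neq0 : J != [set 0].
Proof.
apply/negP => /eqP E; have := mkJ u1; rewrite E inE -mk0 => /eqP /mk_inj [_ E' _].
by move: u1_neq0; rewrite E' eqxx.
Qed.


Definition pre w (Y : {set 'M[F]_(n + 1)}) : {set 'M[F]_(n + 1)} :=
  [set X | [exists A, exists b, [&& ok1 A, b \in F2, mk A (A *m w - b *: w) b \in Y & X == mk A 0 b]]].

Lemma inpre w Y X : reflect (exists (A : 'M[F]_n) (b : F), [/\ ok1 A, b \in F2, mk A (A *m w - b *: w) b \in Y & X = mk A 0 b]) (X \in pre w Y).
Proof.
rewrite inE; apply: (iffP existsP) => [[A /existsP [b /and4P [H1 H2 H3 /eqP ->]]] | [A [b [H1 H2 H3 ->]]]].
  by exists A, b.
by exists A; apply/existsP; exists b; apply/and4P; split.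
Qed.

Lemma pre_sub w Y : is_subring Y -> is_subring (pre w Y) /\ pre w Y \subset S.
Proof.
move=> [Y0 [YB YM]]; have [H0 _ HB HM] := F2c.
split; last by apply/subsetP => X /inpre [A [b [HA Hb _ ->]]]; apply: mkS.
split.
  apply/inpre; exists 0, 0; rewrite mul0mx scale0r subrr mk0; split => //; exact: ok0.
split => x y /inpre [A [b [HA Hb HY ->]]] /inpre [A' [b' [HA' Hb' HY' ->]]]; apply/inpre.
  exists (A - A'), (b - b'); split; rewrite ?okB ?HB //.
    by have := YB _ _ HY HY'; rewrite Tw_sub.
  by rewrite mk_sub subrr.
exists (A *m A'), (b * b'); split; rewrite ?okM ?HM //.
  by have := YM _ _ HY HY'; rewrite Tw_mul.
by rewrite mk_mul mulmx0 scaler0 addr0.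
Qed.

Definition proj (Y : {set 'M[F]_(n + 1)}) : {set 'M[F]_(n + 1)} :=
  [set X | [exists A, exists v, exists b, [&& ok1 A, b \in F2, mk A v b \in Y & X == mk A 0 b]]].

Lemma inproj Y X : reflect (exists (A : 'M[F]_n) v (b : F), [/\ ok1 A, b \in F2, mk A v b \in Y & X = mk A 0 b]) (X \in proj Y).
Proof.
rewrite inE; apply: (iffP existsP) => [[A /existsP [v /existsP [b /and4P [H1 H2 H3 /eqP ->]]]] | [A [v [b [H1 H2 H3 ->]]]]].
  by exists A, v, b.
by exists A; apply/existsP; exists v; apply/existsP; exists b; apply/and4P; split.
Qed.

Lemma proj_sub Y : is_subring Y -> is_subring (proj Y) /\ proj Y \subset S.
Proof.
move=> [Y0 [YB YM]]; have [H0 _ HB HM] := F2c.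
split; last by apply/subsetP => X /inproj [A [v [b [HA Hb _ ->]]]]; apply: mkS.
split.
  apply/inproj; exists 0, 0, 0; rewrite mk0; split => //; exact: ok0.
split => x y /inproj [A [v [b [HA Hb HY ->]]]] /inproj [A' [v' [b' [HA' Hb' HY' ->]]]]; apply/inproj.
  exists (A - A'), (v - v'), (b - b'); split; rewrite ?okB ?HB //.
    by have := YB _ _ HY HY'; rewrite mk_sub.
  by rewrite mk_sub subrr.
exists (A *m A'), (A *m v' + b' *: v), (b * b'); split; rewrite ?okM ?HM //.
  by have := YM _ _ HY HY'; rewrite mk_mul.
by rewrite mk_mul mulmx0 scaler0 addr0.
Qed.


Lemma allTw (C0 : {set {set 'M[F]_(n + 1)}}) k : cover_mod R [set 0] C0 -> #|C0| = k ->
  (forall k', is_sigma_mod R J k' -> (k < k')%N) -> forall w, Tw w \in C0.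
Proof.
move=> [memC0 uC0] cC0 Hlt w; apply/negPn/negP => nT.
have [H0 _ _ _] := F2c.
have TR := TwR w.
have nsub : forall Y, Y \in C0 -> ~~ (Tw w \subset Y).
  move=> Y HY; apply/negP => sTY.
  have [[sY pY] _] := memC0 Y HY.
  have nYT : ~~ (Y \subset Tw w).
    apply/negP => sYT; have EY : Y = Tw w by apply/eqP; rewrite eqEsubset sYT sTY.
    by move: nT; rewrite -EY HY.
  have [a Ha naT] := subsetPn nYT.
  have sYR : Y \subset R by move: pY; rewrite properE => /andP [].
  have /inR [A [v [b [HA Hb Ea]]]] := subsetP sYR a Ha.
  have Ht := subsetP sTY _ (mkTw w HA Hb).
  have [Y0 [YB YM]] := sY.
  have surj : forall A' b', ok1 A' -> b' \in F2 -> exists v', mk A' v' b' \in Y.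
    by move=> A' b' HA' Hb'; exists (A' *m w - b' *: w); apply: (subsetP sTY); apply: mkTw.
  have Hu := YB _ _ Ha Ht; rewrite Ea mk_sub !subrr in Hu.
  have nu : v - (A *m w - b *: w) != 0.
    apply/negP; rewrite subr_eq0 => /eqP Ev; move: naT; rewrite Ea Ev mkTw //.
  have sRY := full sY surj (simp sY surj nu Hu).
  by move: pY; rewrite properE sRY andbF.
pose D := [set oplusJ (pre w Y) J | Y in C0].
have covD : cover_mod R J D.
  have memD : forall Z, Z \in D -> proper_subring R Z /\ J \subset Z.
    move=> Z /imsetP [Y HY ->].
    have [[sY _] _] := memC0 Y HY.
    have [sP sPS] := pre_sub w sY.
    apply: oplus_proper => //; rewrite properE sPS /=.
    apply/negP => sSP; have [t Ht ntY] := subsetPn (nsub Y HY).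
    have /inTw [A [b [HA Hb Et]]] := Ht.
    have /inpre [A' [b' [_ _ HY' /mk_inj [EA _ Eb]]]] := subsetP sSP _ (mkS HA Hb).
    by move: ntY; rewrite Et EA Eb HY'.
  split; first exact: memD.
  apply/eqP; rewrite eqEsubset; apply/andP; split.
    apply/bigcupsP => Z /memD [[_ pZ] _]; by move: pZ; rewrite properE => /andP [].
  apply/subsetP => X /inR [A [v [b [HA Hb ->]]]].
  have Ht := subsetP TR _ (mkTw w HA Hb).
  rewrite -uC0 in Ht; case/bigcupP: Ht => Y HY Ht.
  apply/bigcupP; exists (oplusJ (pre w Y) J); first exact: imset_f.
  by apply: oplus_in; apply/inpre; exists A, b.
have [C1 [cov1 min1]] := exists_min (ex_intro _ D covD).
have sig1 : is_sigma_mod R J #|C1| by split => //; exists C1.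
have := Hlt _ sig1.
have := min1 _ covD.
have := leq_imset_card (fun Y => oplusJ (pre w Y) J) C0.
rewrite -/D cC0 => a b c.
have := leq_trans b a; rewrite leqNgt c //.
Qed.


Lemma proj_proper (C0 : {set {set 'M[F]_(n + 1)}}) Y : cover_mod R [set 0] C0 ->
  Y \in C0 -> Y \notin complements R J -> proper_subring S (proj Y).
Proof.
move=> [memC0 uC0] HY nY.
have [[sY pY] _] := memC0 Y HY.
have sYR : Y \subset R by move: pY; rewrite properE => /andP [].
have [sP sPS] := proj_sub sY; split => //.
rewrite properE sPS /=; apply/negP => sSP.
have surj : forall A b, ok1 A -> b \in F2 -> exists v, mk A v b \in Y.
  move=> A b HA Hb.
  have /inproj [A' [v [b' [_ _ HY' /mk_inj [EA _ Eb]]]]] := subsetP sSP _ (mkS HA Hb).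
  by exists v; rewrite EA Eb.
have [Y0 [YB YM]] := sY.
case: (boolP [exists u : 'cV[F]_n, (u != 0) && (mk 0 u 0 \in Y)]).
  case/existsP => u /andP [nu Hu].
  have sRY := full sY surj (simp sY surj nu Hu).
  by move: pY; rewrite properE sRY andbF.
move/existsPn => noJ.
move: nY; rewrite inE => /negP; apply.
apply/and5P; split => //.
- apply/forallP => x; apply/forallP => y; apply/implyP => Hx; apply/implyP => Hy.
  by rewrite YB ?YM.
- apply/eqP/setP => X; rewrite in_setI in_set1; apply/andP/eqP => [[HX HJ] | ->].
    case/inJ: HJ HX => u ->; have := noJ u; rewrite negb_and negbK => /orP [/eqP -> _ | /negbTE -> //].
    by rewrite mk0.
  by split => //; rewrite -mk0 mkJ.
apply/forallP => r; apply/eqP; apply/idP/idP.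
  case/inR => [A [v [b [HA Hb ->]]]].
  have [y Hy] := surj A b HA Hb.
  apply/existsP; exists (mk A y b); apply/existsP; exists (mk 0 (v - y) 0).
  by rewrite Hy mkJ /= mk_add addr0 subrKC addr0 eqxx.
case/existsP => t /existsP [x /and3P [Ht Hx /eqP ->]].
by apply: RD; [apply: (subsetP sYR) | apply: (subsetP JR)].
Qed.

Lemma adm2 (C0 : {set {set 'M[F]_(n + 1)}}) : cover_mod R [set 0] C0 ->
  adm [set gmax S (proj Y) | Y in C0 :\: complements R J].
Proof.
move=> covC0; have [memC0 uC0] := covC0.
split.
  move=> M /imsetP [Y /setDP [HY nY] ->].
  exact: (gmaxP (proj_proper covC0 HY nY)).1.
apply/bigcupsP => x Hx; apply/subsetP => s Hs.
case/setD1P: Hx => nx0 /inJ [u Ex]; rewrite Ex in Hs nx0.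
have [A [b [HA Hb Es Eu]]] := centr_inv Hs.
have nu : u != 0 by apply: contraNneq nx0 => ->; rewrite mk0.
pose f w := A *m w - b *: w.
have [v Hv] : exists v, forall w, f w != v.
  case: (boolP [exists v, [forall w, f w != v]]).
    by case/existsP => v /forallP Hv; exists v.
  move/existsPn => H; exfalso.
  have surj : forall v, v \in [set f w | w in [set: 'cV[F]_n]].
    move=> v; have := H v; rewrite negb_forall => /existsP [w]; rewrite negbK => /eqP <-.
    by rewrite imset_f ?inE.
  have : #|[set f w | w in [set: 'cV[F]_n]]| == #|[set: 'cV[F]_n]|.
    by apply/eqP; apply: eq_card => v; rewrite surj inE.
  move/imset_injP => finj.
  have := finj u 0; rewrite !inE /f Eu subrr mulmx0 scaler0 subrr => /(_ isT isT erefl) E.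
  by move: nu; rewrite E eqxx.
have Hr : mk A v b \in R by apply: mkR.
rewrite -uC0 in Hr; case/bigcupP: Hr => Y HY Hr.
have nY : Y \notin complements R J.
  rewrite compl_eq; apply/negP => /imsetP [w _ EY].
  rewrite EY in Hr; case/inTw: Hr => A' [b' [_ _ /mk_inj [EA Ev Eb]]].
  by move: (Hv w); rewrite /f Ev EA Eb eqxx.
apply/bigcupP; exists (gmax S (proj Y)).
  by apply: imset_f; rewrite inE nY HY.
apply: (subsetP (gmaxP (proj_proper covC0 HY nY)).2).
by rewrite Es; apply/inproj; exists A, v, b.
Qed.


Lemma part2 (Mc : {set {set 'M[F]_(n + 1)}}) : adm Mc ->
  (forall Mc', adm Mc' -> (#|Mc| <= #|Mc'|)%N) -> sigma_elementary R ->
  exists k, is_sigma R k /\ (#|complements R J| + #|Mc| <= k)%N.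
Proof.
move=> admMc minMc SE.
have [k [[[C0 [covC0 cC0]] minC] Hlt]] := SE J J_ideal J_neq0.
exists k; split; first by split => //; exists C0.
have allT := allTw covC0 cC0 Hlt.
have sub : complements R J \subset C0.
  by rewrite compl_eq; apply/subsetP => T0 /imsetP [w _ ->]; apply: allT.
have h1 := minMc _ (adm2 covC0).
have h2 := leq_imset_card (fun Y => gmax S (proj Y)) (C0 :\: complements R J).
have h3 : #|C0 :\: complements R J| = (#|C0| - #|complements R J|)%N.
  by rewrite cardsD (setIidPr sub).
have h4 := subset_leq_card sub.
rewrite h3 in h2.
rewrite -cC0 -(subnKC h4) leq_add2l; exact: leq_trans h1 h2.
Qed.

Lemma Mc_pos (Mc : {set {set 'M[F]_(n + 1)}}) : adm Mc -> (0 < #|Mc|)%N.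
Proof.
move=> [_ Hc]; have [H0 _ _ _] := F2c.
have : (0 : 'M[F]_(n + 1)) \in \bigcup_(x in J :\ 0) centr S x.
  apply/bigcupP; exists (mk 0 u1 0); first exact: x1_J0.
  by rewrite centrE -mk0 mkS ?ok0 //= mk0 mul0r mulr0.
move/(subsetP Hc) => /bigcupP [M HM _].
by apply/card_gt0P; exists M.
Qed.

End Main.

Lemma arith (q m : nat) : (1 < q)%N ->
  (q ^ m + (q ^ m - 1) %/ (q - 1))%N = ((q ^ m.+1 - 1) %/ (q - 1))%N.
Proof.
move=> q1; have qp : (0 < q - 1)%N by rewrite subn_gt0.
have a1 : (0 < q ^ m)%N by rewrite expn_gt0 ltnW.
rewrite -divnMDl // expnS.
move: a1; set a := (q ^ m)%N => a1.
have -> : (a * (q - 1) + (a - 1) = q * a - 1)%N by nia.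
by [].
Qed.

End Aux.
Import Aux.

Theorem proposition3p3 (p d1 d2 n : nat) (F : finFieldType)
  (Mc : {set {set 'M[F]_(n + 1)}}) :
  prime p -> (0 < d1)%N -> (0 < d2)%N -> (1 <= n)%N ->
  p \in [pchar F] -> #|F| = (p ^ lcmn d1 d2)%N ->
  let q1 := (p ^ d1)%N in let q2 := (p ^ d2)%N in let q := (p ^ lcmn d1 d2)%N in
  let R := @Aring F n q1 q2 in
  let S := @Sdiag F n q1 q2 in
  let J := @Jrad F n in
  let admissible (Mc' : {set {set 'M[F]_(n + 1)}}) :=
    (forall M, M \in Mc' -> maximal_subring S M) /\
    (\bigcup_(x in J :\ 0) centr S x) \subset (\bigcup_(M in Mc') M) in
  admissible Mc ->
  (forall Mc', admissible Mc' -> (#|Mc| <= #|Mc'|)%N) ->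
  let Z := [set oplusJ M J | M in Mc] in
  [/\ is_cover R (complements R J :|: Z),
      sigma_elementary R -> is_minimal_cover R (complements R J :|: Z),
      (#|Z| <= (#|J| - 1) %/ (q - 1))%N /\
        ((#|J| - 1) %/ (q - 1) = (q ^ n - 1) %/ (q - 1))%N &
      sigma_elementary R ->
        exists k, is_sigma R k /\ (q ^ n + 1 <= k)%N /\
                  (k <= (q ^ n.+1 - 1) %/ (q - 1))%N].
Proof.
move=> pp d1p d2p n1 pcF cardF q1 q2 q R S J admissible admMc minMc Z.
have cov := cover1 pcF d1p d2p n1 admMc.1 admMc.2.
have b3 : (#|Mc| <= (#|J| - 1) %/ (#|F| - 1))%N := bound3 pcF d1p d2p minMc.
have cZ : (#|Z| <= #|Mc|)%N := leq_imset_card _ _.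
have cC : #|complements R J| = (q ^ n)%N by rewrite (card_compl n pcF d1p d2p) cardF.
have cU : (#|complements R J :|: Z| <= q ^ n + #|Mc|)%N.
  by rewrite cardsU -cC; apply: (leq_trans (leq_subr _ _)); rewrite leq_add2l.
have q1' : (1 < q)%N by rewrite /q -cardF finNzRing_gt1.
have eJ : ((#|J| - 1) %/ (q - 1) = (q ^ n - 1) %/ (q - 1))%N by rewrite card_J cardF.
split.
- exact: cov.
- move=> SE; have [k [Hk Hb]] := part2 pcF d1p d2p n1 cardF admMc minMc SE.
  split => // C' HC'; apply: (leq_trans cU); rewrite -cC.
  apply: (leq_trans Hb); exact: Hk.2 C' HC'.
- split => //; apply: (leq_trans cZ); by rewrite /q -cardF.
- move=> SE; have [k [Hk Hb]] := part2 pcF d1p d2p n1 cardF admMc minMc SE.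
  exists k; split => //; split.
    rewrite cC in Hb; apply: leq_trans _ Hb; rewrite leq_add2l.
    exact: (@Mc_pos F n p d1 d2 pcF d1p d2p n1 Mc admMc).
  apply: (leq_trans (Hk.2 _ cov)); apply: (leq_trans cU).
  rewrite -arith // leq_add2l -eJ /q -cardF //.
Qed.
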